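(* In any execution of \textsf{Murmur} (described in the context), if $\rho$ and $\pi$ are correct processes and $\rho$ is in $\pi$'s gossip sample, then $\pi$ is eventually in $\rho$'s gossip sample.
   Context: System model: a fixed set $\Pi$ of processes, some Byzantine and the rest correct, communicating asynchronously over reliable authenticated point-to-point links (every message between correct processes is eventually delivered after a finite delay); signatures cannot be forged. \textsf{Murmur} (parameter $G$): upon initialization each correct process samples $\bar G$ from a Poisson distribution with mean $G$, chooses $\bar G$ distinct processes uniformly at random as its initial gossip sample, and sends a GossipSubscribe message to each of them. A correct process modifies its gossip sample only at initialization and upon receiving a GossipSubscribe message from a process $\pi$, in which case it adds $\pi$ to its gossip sample (and, if it has already delivered a message, sends it a Gossip message carrying the delivered message and signature). Upon first obtaining a correctly signed message (by broadcasting it, for the sender, or by receiving a Gossip message with a valid sender signature), a correct process records it as delivered, forwards it in a Gossip message to every process in its gossip sample, and delivers it. *)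

(* Defs.v *)
From mathcomp Require Import all_boot.
Set Implicit Arguments. Unset Strict Implicit. Unset Printing Implicit Defensive.

(* Messages of Murmur: GossipSubscribe, and Gossip carrying the broadcast
   payload of type M together with the sender's signature of type Sg. *)
Inductive murmur_msg (M Sg : Type) : Type :=
| GossipSubscribe : murmur_msg M Sg
| Gossip : M -> Sg -> murmur_msg M Sg.
Arguments GossipSubscribe {M Sg}.
Arguments Gossip {M Sg}.

(* An execution in discrete global time t = 0, 1, 2, ...  Step t leads from
   the state at time t to the state at time t+1.  Initialization of every
   correct process takes place at time 0 (step 0).
   - [sample t p]    : gossip sample of p at time t;
   - [delivered t p] : the (message, signature) p has delivered by time t, if any;
   - [bcast t p]     : p broadcasts this (message, signature) during step t;
   - [sent t p q m]  : p sends m to q during step t;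
   - [recv t p q m]  : p receives m from q during step t.
   Only correct processes are constrained; Byzantine behaviour is arbitrary. *)
Record murmur_execution (P : finType) (correct : pred P) (M Sg : Type)
    (sender : P) (valid : M -> Sg -> bool) := MurmurExec {
  sample : nat -> P -> {set P};
  delivered : nat -> P -> option (M * Sg);
  bcast : nat -> P -> option (M * Sg);
  sent : nat -> P -> P -> murmur_msg M Sg -> Prop;
  recv : nat -> P -> P -> murmur_msg M Sg -> Prop;

  bcast_ok : forall t p x, correct p -> bcast t p = Some x ->
    p = sender /\ valid x.1 x.2;

  sample_step : forall t p q, correct p ->
    (q \in sample t.+1 p) <-> (q \in sample t p \/ recv t p q GossipSubscribe);

  delivered_init : forall p, correct p -> delivered 0 p = None;
  delivered_keep : forall t p x, correct p ->
    delivered t p = Some x -> delivered t.+1 p = Some x;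
  delivered_new : forall t p x, correct p -> delivered t p = None ->
    delivered t.+1 p = Some x ->
    valid x.1 x.2 /\ (bcast t p = Some x \/ exists q, recv t p q (Gossip x.1 x.2));
  delivered_must : forall t p, correct p -> delivered t p = None ->
    (bcast t p <> None \/ exists q x, valid x.1 x.2 /\ recv t p q (Gossip x.1 x.2)) ->
    delivered t.+1 p <> None;

  sent_spec : forall t p q m, correct p ->
    sent t p q m <->
    ((m = GossipSubscribe /\ t = 0 /\ q \in sample 0 p)
     \/ exists x : M * Sg, m = Gossip x.1 x.2 /\
          ((delivered t p = None /\ delivered t.+1 p = Some x /\ q \in sample t.+1 p)
           \/ (delivered t p = Some x /\ recv t p q GossipSubscribe)));

  reliable : forall t p q m, correct p -> correct q -> sent t p q m ->
    exists t', t < t' /\ recv t' q p m;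
  authentic : forall t p q m, correct q -> recv t p q m ->
    exists t', t' < t /\ sent t' q p m
}.

(* Main.v *)
Require Import Defs.
From mathcomp Require Import all_boot.

Set Implicit Arguments.
Section S.
Variables (P : finType) (correct : pred P) (M Sg : Type) (sender : P)
    (valid : M -> Sg -> bool) (E : murmur_execution correct sender valid).

Lemma mono p q t d : correct p -> q \in sample E t p -> q \in sample E (t + d) p.
Proof.
move=> cp h; elim: d => [|d IH]; first by rewrite addn0.
by rewrite addnS; apply (proj2 (sample_step E _ _ cp)); left.
Qed.

Lemma origin p q t : correct p -> q \in sample E t p ->
  q \in sample E 0 p \/ exists t0, t0 < t /\ recv E t0 p q GossipSubscribe.
Proof.
move=> cp; elim: t => [|t IH]; first by left.
move=> /(proj1 (sample_step E _ _ cp))  [/IH [h|[t0 [h1 h2]]]|h].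
- by left.
- by right; exists t0; split => //; apply: ltn_trans h1 _.
- by right; exists t.
Qed.
End S.

Theorem lemma1 (P : finType) (correct : pred P) (M Sg : Type) (sender : P)
    (valid : M -> Sg -> bool)
    (E : murmur_execution correct sender valid) (rho pi : P) (t : nat) :
  correct rho -> correct pi -> rho \in sample E t pi ->
  exists t', t <= t' /\ pi \in sample E t' rho.
Proof.
move=> cr cp h.
case: (@origin _ _ _ _ _ _ E _ _ _ cp h) => [h0|[t0 [_ hr]]].
- have hs : sent E 0 pi rho GossipSubscribe.
    by apply (proj2 (sent_spec E _ _ _ cp)); left.
  have [t1 [_ hr]] := reliable cp cr hs.
  have h1 : pi \in sample E t1.+1 rho by apply (proj2 (sample_step E _ _ cr)); right.
  exists (t + t1.+1); split; first exact: leq_addr.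
  by rewrite addnC; apply: (@mono _ _ _ _ _ _ E).
- have [t1 [_ hs]] := authentic cr hr.
  move: hs => /(proj1 (sent_spec E _ _ _ cr)) [[_ [_ hin]]|[x [hx _]]]; last by [].
  exists t; split => //.
  by rewrite -(add0n t); apply: (@mono _ _ _ _ _ _ E).
Qed.
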